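(* Let $(M,d)$ be a compact metric space and $\varphi:M\to M$ continuous with $h_{\rm Top}(\varphi)<\infty$ and $\mathbb Q\mapsto h_\varphi(\mathbb Q)$ upper semicontinuous on $\mathcal P_\varphi(M)$. Let $\mathbb P\in\mathcal P(M)$ be a weak Gibbs measure for $\mathcal G\in\mathcal A(M)$. Then for every $\mathcal G'=\{G_n'\}\in\mathcal A(M)$, $$\lim_{n\to\infty}\frac1n\log\int_Me^{G_n'}\,d\mathbb P=\mathfrak p_\varphi(\mathcal G+\mathcal G')-\mathfrak p_\varphi(\mathcal G).$$
   Context: $C(M),B(M)$: continuous/bounded Borel real functions, sup norm; $\mathcal P_\varphi(M)$ invariant Borel probability measures; $h_\varphi$ Kolmogorov–Sinai entropy, $h_{\rm Top}$ topological entropy; $S_nG=\sum_{k<n}G\circ\varphi^k$; $B_n(x,\epsilon)=\{y:d(\varphi^ky,\varphi^kx)<\epsilon,0\le k<n\}$. $\mathcal A(M)$: $\{G_n\}\subset B(M)$ such that some $\{G^{(k)}\}\subset C(M)$ has $\lim_k\limsup_nn^{-1}\|G_n-S_nG^{(k)}\|_\infty=0$; sums termwise. Pressure $\mathfrak p_\varphi(\mathcal G)=\lim_{\epsilon\downarrow0}\limsup_nn^{-1}\log\inf\{\sum_{x\in E}e^{G_n(x)}:E\text{ finite},\bigcup_{x\in E}B_n(x,\epsilon)=M\}$. Weak Gibbs for $\mathcal G$: for every $n\ge1,\epsilon>0$ there is $K_n(\epsilon)\ge1$ with $K_n(\epsilon)^{-1}e^{G_n(x)-n\mathfrak p_\varphi(\mathcal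 G)}\le\mathbb P(B_n(x,\epsilon))\le K_n(\epsilon)e^{G_n(x)-n\mathfrak p_\varphi(\mathcal G)}$ for every $x\in M$, and $\lim_{\epsilon\downarrow0}\limsup_nn^{-1}\log K_n(\epsilon)=0$. *)

(* Defs.v *)
From HB Require Import structures.
From mathcomp Require Import all_boot all_order all_algebra finmap.
From mathcomp Require Import all_classical all_reals all_analysis.
Set Implicit Arguments. Unset Strict Implicit. Unset Printing Implicit Defensive.
Import Order.TTheory GRing.Theory Num.Theory.
Import numFieldNormedType.Exports.
Local Open Scope classical_set_scope.
Local Open Scope ring_scope.

Notation borelT M := (g_sigma_algebraType (@open M)).

(* metric spaces with a distinguished point (nonempty); needed for the
   generated sigma-algebra instance.  Harmless: M carries a probability. *)
#[short(type="pmetricType")]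
HB.structure Definition PointedMetric (K : numDomainType) :=
  { M of Pointed M & Metric K M }.

Section ergodic_defs.
Context {R : realType} {M : pmetricType R}.


Local Notation BM := (borelT M).

Definition bowen_ball (phi : M -> M) (n : nat) (x : M) (eps : R) : set M :=
  [set y | forall k, (k < n)%N -> mdist (iter k phi y) (iter k phi x) < eps].

Definition bowen_cover (phi : M -> M) (n : nat) (eps : R) (E : {fset M}) :=
  \bigcup_(x in [set` E]) bowen_ball phi n x eps = [set: M].

Definition birkhoff (phi : M -> M) (g : M -> R) (n : nat) (x : M) : R :=
  \sum_(k < n) g (iter k phi x).

Definition sup_norm (f : M -> R) : \bar R :=
  ereal_sup (range (fun x => (`|f x|)%:E)).

Definition classA (phi : M -> M) (G : nat -> M -> R) : Prop :=
  (forall n, exists C : R, forall x, `|G n x| <= C) /\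
  (forall n, measurable_fun [set: BM] (G n : BM -> R)) /\
  exists Gk : nat -> M -> R, (forall k, continuous (Gk k)) /\
    (fun k => limn_esup (fun n =>
        (sup_norm (fun x => (G n x - birkhoff phi (Gk k) n x)%R) * (n%:R^-1)%R%:E)%E))
      @ \oo --> (0 : \bar R).

Definition pressure (phi : M -> M) (G : nat -> M -> R) : \bar R :=
  lim ((fun eps => limn_esup (fun n =>
      (ln (fine (ereal_inf [set (\sum_(x <- E) expR (G n x))%:E
                             | E in [set E | bowen_cover phi n eps E]]))
        / n%:R)%:E)) @ 0^'+).

Definition htop (phi : M -> M) : \bar R :=
  lim ((fun eps => limn_esup (fun n =>
      (ln (fine (ereal_inf [set (#|` E|%:R)%:E
                             | E in [set E | bowen_cover phi n eps E]]))
        / n%:R)%:E)) @ 0^'+).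

Definition invariant (phi : M -> M) (Q : probability BM R) : Prop :=
  forall A : set BM, measurable A -> Q (phi @^-1` A) = Q A.

Definition mpartition (m : nat) (xi : 'I_m -> set BM) : Prop :=
  (forall i, measurable (xi i)) /\
  (forall i j, i != j -> xi i `&` xi j = set0) /\
  (forall x, exists i, xi i x).

Definition eta (t : R) : R := - (t * ln t).

Definition join_entropy (phi : M -> M) (Q : probability BM R) (m : nat)
    (xi : 'I_m -> set BM) (n : nat) : R :=
  \sum_(w : {ffun 'I_n -> 'I_m})
     eta (fine (Q [set x | forall k : 'I_n, xi (w k) (iter k phi x)])).

(* h_Q(phi, xi) = lim_n (1/n) H_Q(join) (the limit exists; taken as limsup) *)
Definition part_entropy (phi : M -> M) (Q : probability BM R) (m : nat)
    (xi : 'I_m -> set BM) : \bar R :=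
  limn_esup (fun n => (join_entropy phi Q xi n / n%:R)%:E).

Definition ks_entropy (phi : M -> M) (Q : probability BM R) : \bar R :=
  ereal_sup [set e | exists (m : nat) (xi : 'I_m -> set BM),
                        mpartition xi /\ e = part_entropy phi Q xi].

(* upper semicontinuity of Q |-> h_phi(Q) on P_phi(M) for the weak* topology *)
Definition entropy_usc (phi : M -> M) : Prop :=
  forall Q : probability BM R, invariant phi Q ->
  forall c : R, (ks_entropy phi Q < c%:E)%E ->
  exists (k : nat) (f : 'I_k -> M -> R) (delta : R),
    0 < delta /\ (forall i, continuous (f i)) /\
    forall Q' : probability BM R, invariant phi Q' ->
      (forall i, `|Rintegral Q' setT (f i : BM -> R) - Rintegral Q setT (f i : BM -> R)| < delta) ->
      (ks_entropy phi Q' < c%:E)%E.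

Definition weak_gibbs (phi : M -> M) (G : nat -> M -> R) (P : probability BM R) : Prop :=
  exists p : R, pressure phi G = p%:E /\
  exists K : nat -> R -> R,
    (forall n eps, (1 <= n)%N -> 0 < eps ->
       1 <= K n eps /\
       forall x,
         (((K n eps)^-1 * expR (G n x - n%:R * p))%:E <= P (bowen_ball phi n x eps))%E /\
         (P (bowen_ball phi n x eps) <= (K n eps * expR (G n x - n%:R * p))%:E)%E) /\
    (fun eps => limn_esup (fun n => (ln (K n eps) / n%:R)%:E)) @ 0^'+ --> (0 : \bar R).

End ergodic_defs.

(* Main.v *)
Require Import Defs.
From HB Require Import structures.
From mathcomp Require Import all_boot all_order all_algebra finmap.
From mathcomp Require Import all_classical all_reals all_analysis.
From mathcomp Require Import ring lra.
Import Order.TTheory GRing.Theory Num.Theory.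
Import numFieldNormedType.Exports.
Local Open Scope classical_set_scope.
Local Open Scope ring_scope.
Section limsup_lemmas.
Context {R : realType}.
Local Open Scope ereal_scope.

Lemma esup_le_ev (u : nat -> R) (c : R) :
  (\forall n \near \oo, (u n <= c)%R) ->
  limn_esup (fun n => (u n)%:E) <= c%:E.
Proof.
move=> H; rewrite /limn_esup limf_esupE.
apply: (@le_trans _ _ (ereal_sup [set (u n)%:E | n in [set n | (u n <= c)%R]])).
  by apply: ereal_inf_lbound; exists [set n | (u n <= c)%R].
by apply: ge_ereal_sup => _ [n /= hn <-]; rewrite lee_fin.
Qed.

Lemma esup_ge_ev (u : nat -> R) (c : R) :
  (\forall n \near \oo, (c <= u n)%R) ->
  c%:E <= limn_esup (fun n => (u n)%:E).
Proof.
move=> H; rewrite /limn_esup limf_esupE.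
apply: le_ereal_inf_tmp => _ [V hV <-].
have [n [hn1 hn2]] := filter_ex (filterI H hV).
by apply: (@le_trans _ _ (u n)%:E); [rewrite lee_fin|apply: ereal_sup_ubound; exists n].
Qed.

Lemma esup_lt_ev (u : nat -> R) (c : R) :
  limn_esup (fun n => (u n)%:E) < c%:E ->
  \forall n \near \oo, (u n < c)%R.
Proof.
rewrite /limn_esup limf_esupE => /ereal_inf_lt [_ [V hV <-] hlt].
apply: filterS hV => n hn; rewrite -lte_fin.
by apply: le_lt_trans hlt; apply: ereal_sup_ubound; exists n.
Qed.

Lemma esup_le_pw (u v : nat -> R) :
  (forall n, (u n <= v n)%R) ->
  limn_esup (fun n => (u n)%:E) <= limn_esup (fun n => (v n)%:E).
Proof.
move=> uv; rewrite /limn_esup !limf_esupE.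
apply: le_ereal_inf_tmp => _ [V hV <-].
apply: (@le_trans _ _ (ereal_sup [set (u n)%:E | n in V])).
  by apply: ereal_inf_lbound; exists V.
apply: ge_ereal_sup => _ [n hn <-].
by apply: (@le_trans _ _ (v n)%:E); [rewrite lee_fin|apply: ereal_sup_ubound; exists n].
Qed.

End limsup_lemmas.
Section abstract.
Context {R : realType}.

Lemma abstract_main (a : nat -> R) (Zf : R -> nat -> R) (p : R) :
  (forall e1 e2 n, 0 < e1 -> e1 <= e2 -> Zf e2 n <= Zf e1 n) ->
  (exists C, \forall n \near \oo, a n <= C) ->
  (forall eta, 0 < eta -> exists2 e0, 0 < e0 & forall eps, 0 < eps -> eps < e0 ->
      \forall n \near \oo, a n <= Zf eps n - p + eta) ->
  (forall eta, 0 < eta -> exists2 e0, 0 < e0 & forall eps, 0 < eps -> eps < e0 ->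
      \forall n \near \oo, Zf (2 * eps) n - p - eta <= a n) ->
  (forall eta, 0 < eta -> exists2 e0, 0 < e0 & forall r, 0 < r -> r < e0 ->
      exists L, (\forall n \near \oo, L - eta <= Zf r n) /\
                (\forall n \near \oo, Zf (4 * r) n <= L + eta)) ->
  (fun n => (a n)%:E) @ \oo -->
    (lim ((fun eps => limn_esup (fun n => (Zf eps n)%:E)) @ 0^'+) - p%:E)%E.
Proof.
move=> Hmono [C HC] Hup Hlo Hword.
set A := fun eps => limn_esup (fun n => (Zf eps n)%:E).
have [el el0 Hl1] := Hlo 1 ltr01.
set b := 2 * el.
have b0 : 0 < b by rewrite /b mulr_gt0.
have hAub : forall e, 0 < e -> e < b -> (A e <= (C + p + 1)%:E)%E.
  move=> e e0 eb; rewrite /A.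
  have e20 : 0 < e / 2 by rewrite divr_gt0.
  have e2l : e / 2 < el by rewrite ltr_pdivrMr // mulrC.
  apply: esup_le_ev; move: (Hl1 _ e20 e2l) HC; apply: filterS2 => n h1 h2.
  move: h1; rewrite mulrC divfK ?pnatr_eq0 // => h1; lra.
have hmonoA : forall e1 e2, 0 < e1 -> e1 <= e2 -> (A e2 <= A e1)%E.
  by move=> e1 e2 e10 e12; apply: esup_le_pw => n; apply: Hmono.
have hc := @nonincreasing_at_right_cvge R A 0 (BLeft b).
have /hc{}hc : (BRight 0 < BLeft b)%O by rewrite bnd_simp.
have /hc{}hc : {in `]0, b[ &, {homo A : n m / n <= m >-> (m <= n)%E}}.
  move=> x y; rewrite !in_itv /= => /andP[x0 _] _ xy; exact: hmonoA.
rewrite (cvg_lim _ hc); last exact: ereal_hausdorff.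
set Q := ereal_sup _.
have QA : forall e, 0 < e -> e < b -> (A e <= Q)%E.
  move=> e e0 eb; apply: ereal_sup_ubound; exists e => //=.
  by rewrite in_itv /= e0 eb.
have [ew ew0 Hw1] := Hword 1 ltr01.
have Qfin : Q \is a fin_num.
  rewrite fin_numElt; apply/andP; split.
    set e0 := Num.min ew b / 2.
    have e00 : 0 < e0 by rewrite divr_gt0 // lt_min ew0 b0.
    have hmin : 0 < Num.min ew b by rewrite lt_min ew0 b0.
    have e0w : e0 < ew.
      apply: (@lt_le_trans _ _ (Num.min ew b)); first by rewrite /e0 ltr_pdivrMr // ltr_pMr // ltr1n.
      by rewrite ge_min lexx.
    have e0b : e0 < b.
      apply: (@lt_le_trans _ _ (Num.min ew b)); first by rewrite /e0 ltr_pdivrMr // ltr_pMr // ltr1n.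
      by rewrite ge_min lexx orbT.
    have [L [HL1 _]] := Hw1 _ e00 e0w.
    apply: (@lt_le_trans _ _ (L - 1)%:E); first exact: ltNyr.
    apply: le_trans (QA _ e00 e0b); exact: esup_ge_ev.
  apply: (@le_lt_trans _ _ (C + p + 1)%:E); last exact: ltry.
  apply: ge_ereal_sup => _ [e /= he <-]; move: he; rewrite in_itv /= => /andP[e0 eb].
  exact: hAub.
rewrite -(fineK Qfin) -EFinB; set q0 := fine Q.
have Qq : Q = q0%:E by rewrite /q0 fineK.
apply: cvg_EFin; first exact: nearW.
apply/cvgrPdist_le => eta eta0.
set e := eta / 4.
have e0 : 0 < e by rewrite divr_gt0.
have [eu eu0 Hu] := Hup e e0.
set ep := Num.min eu b / 2.
have hmin : 0 < Num.min eu b by rewrite lt_min eu0 b0.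
have ep0 : 0 < ep by rewrite divr_gt0.
have eplt : ep < Num.min eu b by rewrite /ep ltr_pdivrMr // ltr_pMr // ltr1n.
have epu : ep < eu by apply: (lt_le_trans eplt); rewrite ge_min lexx.
have epb : ep < b by apply: (lt_le_trans eplt); rewrite ge_min lexx orbT.
have hAep : (A ep < (q0 + e)%:E)%E.
  by apply: (le_lt_trans (QA _ ep0 epb)); rewrite Qq lte_fin ltrDl.
have U1 := esup_lt_ev _ _ hAep.
have U2 := Hu _ ep0 epu.
have : ((q0 - e)%:E < Q)%E by rewrite Qq lte_fin ltrBlDr ltrDl.
move=> /ereal_sup_gt [_ [es /= hes' <-] hes]; move: hes'; rewrite in_itv /= => /andP[es0 esb].
have [ew' ew0' Hw] := Hword e e0.
have [el' el0' Hl] := Hlo e e0.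
set m := Num.min (Num.min ew' el') es.
have m0 : 0 < m by rewrite !lt_min ew0' el0' es0.
set eps := m / 8.
have eps0 : 0 < eps by rewrite divr_gt0.
have hm1 : m <= ew' by rewrite /m !ge_min lexx.
have hm2 : m <= el' by rewrite /m !ge_min lexx orbT.
have hm3 : m <= es by rewrite /m ge_min lexx orbT.
have r0 : 0 < 2 * eps by rewrite mulr_gt0.
have rw : 2 * eps < ew' by rewrite /eps; lra.
have epsl : eps < el' by rewrite /eps; lra.
have [L [HL1 HL2]] := Hw _ r0 rw.
have hAL : (A (4 * (2 * eps))%R <= (L + e)%:E)%E := esup_le_ev _ _ HL2.
have hA8 : (A es <= A (4 * (2 * eps))%R)%E.
  apply: hmonoA; first by rewrite mulr_gt0.
  rewrite /eps; lra.
have qL : q0 - e < L + e.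
  by rewrite -lte_fin; apply: (lt_le_trans hes); apply: (le_trans hA8).
have L3 := Hl _ eps0 epsl.
near=> n.
have [u1 [u2 [l1 l3]]] : [/\ Zf ep n < q0 + e, a n <= Zf ep n - p + e,
   L - e <= Zf (2 * eps) n & Zf (2 * eps) n - p - e <= a n].
  by split; near: n.
rewrite ler_norml; apply/andP; split; rewrite /e in u1 u2 l1 l3 qL *; lra.
Unshelve. all: by end_near.
Qed.

End abstract.
Section topo.
Context {R : realType} {M : pmetricType R}.

Lemma mball_nbhs (z0 c : M) (eps : R) : mdist z0 c < eps ->
  nbhs z0 [set z | mdist z c < eps].
Proof.
move=> h; have hp : 0 < eps - mdist z0 c :> R by rewrite subr_gt0.
apply/nbhs_ballP; exists (eps - mdist z0 c); first exact: hp.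
move=> z; rewrite ballEmdist /= => hz.
apply: (le_lt_trans (metric_triangle z z0 c)).
by rewrite metric_sym -ltrBrDr.
Qed.

Lemma mball_open (c : M) (eps : R) : open [set z | mdist z c < eps].
Proof.
rewrite openE => z /= hz; exact: mball_nbhs.
Qed.

Lemma iter_cont (phi : M -> M) : continuous phi -> forall k, continuous (iter k phi).
Proof.
move=> hphi; elim=> [|k IH] x /=; first exact: cvg_id.
exact: (continuous_comp (IH x) (hphi _)).
Qed.

Lemma bowen_nbhs (phi : M -> M) n x eps y : continuous phi ->
  bowen_ball phi n x eps y -> nbhs y (bowen_ball phi n x eps).
Proof.
move=> hphi; elim: n => [|n IH] hy.
  by apply: nearW => z k; rewrite ltn0.
have hy' : bowen_ball phi n x eps y by move=> k kn; apply: hy; apply: ltnW.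
have h1 := IH hy'.
have h2 : nbhs y ((iter n phi) @^-1` [set z | mdist z (iter n phi x) < eps]).
  exact: (iter_cont phi hphi n y _ (mball_nbhs _ _ _ (hy n (ltnSn n)))).
near=> z.
have hz1 : bowen_ball phi n x eps z by near: z.
have hz2 : mdist (iter n phi z) (iter n phi x) < eps by near: z.
move=> k; rewrite ltnS leq_eqVlt.
by case/orP => [/eqP -> //|kn]; apply: hz1.
Unshelve. all: by end_near.
Qed.

Lemma bowen_open (phi : M -> M) n x eps : continuous phi ->
  open (bowen_ball phi n x eps).
Proof. by move=> hphi; rewrite openE => y hy; apply: bowen_nbhs. Qed.

Lemma bowen_meas (phi : M -> M) n x eps : continuous phi ->
  measurable (bowen_ball phi n x eps : set (borelT M)).
Proof. move=> hphi; apply: sub_sigma_algebra; exact: bowen_open. Qed.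

Lemma bowen_center (phi : M -> M) n x eps : 0 < eps -> bowen_ball phi n x eps x.
Proof. by move=> e0 k _; rewrite mdistxx. Qed.

Lemma cover_exists (phi : M -> M) n eps : compact [set: M] -> continuous phi ->
  0 < eps -> exists E, bowen_cover phi n eps E.
Proof.
move=> cM hphi e0; move: cM; rewrite compact_cover => /(_ M [set: M]
  (fun x => bowen_ball phi n x eps)).
case.
- by move=> x _; apply: bowen_open.
- by move=> y _; exists y => //; apply: bowen_center.
move=> D _ hD; exists D; rewrite /bowen_cover.
apply/seteqP; split => // y _; have [x hx hy] := hD y I.
Qed.

Lemma net_exists (r : R) : compact [set: M] -> 0 < r ->
  exists C : {fset M}, forall y, exists2 c, c \in C & mdist y c < r.
Proof.
move=> cM r0; have [E hE] := @cover_exists id 1 r cM (fun x => cvg_id) r0.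
exists E => y; have : [set: M] y by [].
rewrite -hE => -[x /= xE hx]; exists x => //.
exact: (hx 0%N).
Qed.

Lemma pos_min_seq (T : eqType) (s : seq T) (g : T -> R) :
  (forall x, 0 < g x) -> exists2 d, 0 < d & forall x, x \in s -> d <= g x.
Proof.
move=> gpos; elim: s => [|x s [d d0 hd]]; first by exists 1.
exists (Num.min (g x) d); first by rewrite lt_min gpos d0.
move=> y; rewrite inE => /orP[/eqP ->|ys]; first by rewrite ge_min lexx.
by rewrite ge_min hd // orbT.
Qed.

Lemma unif_cont (f : M -> R) : compact [set: M] -> continuous f ->
  forall eta, 0 < eta -> exists2 d, 0 < d &
    forall x y, mdist x y < d -> `|f x - f y| < eta.
Proof.
move=> cM hf eta eta0.
have eta2 : 0 < eta / 2 by rewrite divr_gt0.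
have hd : forall x, exists d, 0 < d /\ forall y, mdist x y < d -> `|f x - f y| < eta / 2.
  move=> x; have := hf x; move/cvgrPdist_lt => /(_ _ eta2) /nbhs_ballP [d d0 hd].
  exists d; split => // y hy; apply: hd; rewrite ballEmdist; exact: hy.
have [dx hdx] := choice hd.
move: cM; rewrite compact_cover => /(_ M [set: M]
  (fun x => [set z | mdist z x < dx x / 2])).
case.
- by move=> x _; apply: mball_open.
- move=> y _; exists y => //=; rewrite mdistxx divr_gt0 //.
  by case: (hdx y).
move=> D _ hD.
have [d d0 hdD] := @pos_min_seq M (enum_fset D) (fun x => dx x / 2)
  (fun x => divr_gt0 (proj1 (hdx x)) (ltr0Sn _ 1)).
exists d => // y z hyz.
have [c /= cD hc] := hD y I.
have hcy : mdist c y < dx c by apply: (lt_trans (y:=dx c / 2)); rewrite 1?metric_sym // ltr_pdivrMr // ltr_pMr ?ltr1n; case: (hdx c).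
have hcz : mdist c z < dx c.
  apply: (le_lt_trans (metric_triangle c y z)).
  have := hdD c cD; rewrite metric_sym in hc => hdc.
  have : dx c / 2 + dx c / 2 = dx c by rewrite -splitr.
  move=> hs; rewrite -hs; apply: ltrD => //; exact: (lt_le_trans hyz).
have h1 := (proj2 (hdx c)) _ hcy.
have h2 := (proj2 (hdx c)) _ hcz.
have -> : f y - f z = (f c - f z) - (f c - f y) by ring.
apply: (le_lt_trans (ler_normB _ _)).
rewrite (splitr eta) addrC; exact: ltrD.
Qed.

End topo.
Section Zcov.
Context {R : realType} {M : pmetricType R}.
Variable phi : M -> M.
Hypothesis cM : compact [set: M].
Hypothesis hphi : continuous phi.

Definition Zc (H : nat -> M -> R) (n : nat) (eps : R) : R :=
  fine (ereal_inf [set (\sum_(x <- E) expR (H n x))%:E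
                             | E in [set E | bowen_cover phi n eps E]]).

Lemma cover_nonempty {n eps} {E : {fset M}} : bowen_cover phi n eps E ->
  exists2 x, x \in E & True.
Proof.
move=> hE; have : [set: M] point by [].
by rewrite -hE => -[x /= xE _]; exists x.
Qed.

Lemma sum_ge_one {E : {fset M}} {f : M -> R} {x} : x \in E ->
  (forall y, 0 <= f y) -> f x <= \sum_(y <- E) f y.
Proof.
move=> xE f0; rewrite (bigD1_seq x) //=.
by rewrite lerDl; apply: sumr_ge0 => y _.
Qed.

Variables (H : nat -> M -> R) (n : nat) (eps : R).
Hypothesis eps0 : 0 < eps.
Hypothesis Hlb : exists c, forall x, c <= H n x.

Let S := [set (\sum_(x <- E) expR (H n x))%:E | E in [set E | bowen_cover phi n eps E]].

Lemma Zc_fin : ereal_inf S = (Zc H n eps)%:E.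
Proof.
have [c hc] := Hlb.
have [E0 hE0] := cover_exists phi n eps cM hphi eps0.
rewrite /Zc fineK // fin_numElt; apply/andP; split.
  apply: (@lt_le_trans _ _ (expR c)%:E); first exact: ltNyr.
  apply: le_ereal_inf_tmp => _ [E /= hE <-]; rewrite lee_fin.
  have [x xE _] := cover_nonempty hE.
  apply: (@le_trans _ _ (expR (H n x))); first by rewrite ler_expR.
  exact: (sum_ge_one xE (fun y => expR_ge0 _)).
apply: (@le_lt_trans _ _ (\sum_(x <- E0) expR (H n x))%:E); last exact: ltry.
by apply: ereal_inf_lbound; exists E0.
Qed.

Lemma Zc_lb E : bowen_cover phi n eps E -> Zc H n eps <= \sum_(x <- E) expR (H n x).
Proof.
move=> hE; rewrite -lee_fin -Zc_fin; apply: ereal_inf_lbound; by exists E.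
Qed.

Lemma Zc_glb b : (forall E, bowen_cover phi n eps E -> b <= \sum_(x <- E) expR (H n x)) ->
  b <= Zc H n eps.
Proof.
move=> hb; rewrite -lee_fin -Zc_fin; apply: le_ereal_inf_tmp => _ [E /= hE <-].
by rewrite lee_fin; apply: hb.
Qed.

Lemma Zc_pos : 0 < Zc H n eps.
Proof.
have [c hc] := Hlb.
apply: (@lt_le_trans _ _ (expR c)); first exact: expR_gt0.
apply: Zc_glb => E hE; have [x xE _] := cover_nonempty hE.
apply: (@le_trans _ _ (expR (H n x))); first by rewrite ler_expR.
exact: (sum_ge_one xE (fun y => expR_ge0 _)).
Qed.

End Zcov.

Lemma cover_mono {R : realType} {M : pmetricType R} (phi : M -> M) n e1 e2 E :
  e1 <= e2 -> bowen_cover phi n e1 E -> bowen_cover phi n e2 E.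
Proof.
move=> e12; rewrite /bowen_cover => hE; apply/seteqP; split => // y _.
have : [set: M] y by [].
rewrite -hE => -[x xE hx]; exists x => // k kn.
exact: (lt_le_trans (hx k kn)).
Qed.

Lemma Zc_mono {R : realType} {M : pmetricType R} (phi : M -> M) (H : nat -> M -> R) n e1 e2 :
  compact [set: M] -> continuous phi -> (exists c, forall x, c <= H n x) ->
  0 < e1 -> e1 <= e2 -> Zc phi H n e2 <= Zc phi H n e1.
Proof.
move=> cM hphi hlb e10 e12.
have e20 : 0 < e2 := lt_le_trans e10 e12.
apply: (@Zc_glb R M phi cM hphi H n e1 e10 hlb) => E hE.
apply: (@Zc_lb R M phi cM hphi H n e2 e20 hlb); exact: cover_mono hE.
Qed.

Lemma Zf_mono {R : realType} {M : pmetricType R} (phi : M -> M) (H : nat -> M -> R) n e1 e2 :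
  compact [set: M] -> continuous phi -> (exists c, forall x, c <= H n x) ->
  0 < e1 -> e1 <= e2 -> ln (Zc phi H n e2) / n%:R <= ln (Zc phi H n e1) / n%:R.
Proof.
move=> cM hphi hlb e10 e12.
have e20 : 0 < e2 := lt_le_trans e10 e12.
apply: ler_wpM2r; first by rewrite invr_ge0.
rewrite ler_ln ?posrE; [exact: Zc_mono| exact: (@Zc_pos R M phi cM hphi H n e2 e20 hlb) | exact: (@Zc_pos R M phi cM hphi H n e1 e10 hlb)].
Qed.
Section classA_lemmas.
Context {R : realType} {M : pmetricType R}.

Lemma esup_lt_ev' (u : nat -> \bar R) (c : R) :
  (limn_esup u < c%:E)%E -> \forall n \near \oo, (u n < c%:E)%E.
Proof.
rewrite /limn_esup limf_esupE => /ereal_inf_lt [_ [V hV <-] hlt].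
apply: filterS hV => n hn.
by apply: le_lt_trans hlt; apply: ereal_sup_ubound; exists n.
Qed.

Lemma classA_bnd (phi : M -> M) G : classA phi G -> forall n, exists C, forall x, `|G n x| <= C.
Proof. by case. Qed.

Lemma classA_approx (phi : M -> M) G : classA phi G -> forall eta, 0 < eta ->
  exists2 g : M -> R, continuous g &
    \forall n \near \oo, forall x, `|G n x - birkhoff phi g n x| <= eta * n%:R.
Proof.
move=> [_ [_ [Gk [Gkc hcv]]]] eta eta0.
move/fine_cvgP: hcv => [hfin /cvgrPdist_lt /(_ _ eta0) hlt].
have [k hk] := filter_ex (filterI hfin hlt).
exists (Gk k) => //.
case: hk => hkfin; rewrite /= sub0r normrN => hkl.
set L := limn_esup _ in hkfin hkl.
have : (L < eta%:E)%E.
  rewrite -(fineK hkfin) lte_fin; exact: (le_lt_trans (ler_norm _) hkl).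
move/esup_lt_ev'; apply: filterS2 (nbhs_infty_gt 0%N) => n n0 hn x.
have hx : (`|G n x - birkhoff phi (Gk k) n x|%:E <= sup_norm (fun x => G n x - birkhoff phi (Gk k) n x)%R)%E.
  by apply: ereal_sup_ubound; exists x.
have npos : (0 < n%:R :> R) by rewrite ltr0n.
have : (sup_norm (fun x => G n x - birkhoff phi (Gk k) n x)%R < (eta * n%:R)%:E)%E.
  have := hn; rewrite -(@lte_pmul2r _ (n%:R)%:E) ?lte_fin // -muleA -EFinM mulVf ?lt0r_neq0 //.
  by rewrite mule1 EFinM.
move=> h; apply/ltW; rewrite -lte_fin; exact: (le_lt_trans hx h).
Qed.

End classA_lemmas.
Section misc.
Context {R : realType} {M : pmetricType R}.

Lemma birk_var (phi : M -> M) (f : M -> R) (d eta : R) n x y :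
  (forall a b, mdist a b < d -> `|f a - f b| < eta) ->
  bowen_ball phi n x d y ->
  `|birkhoff phi f n y - birkhoff phi f n x| <= eta * n%:R.
Proof.
move=> hf hy; rewrite /birkhoff -sumrB.
apply: (le_trans (ler_norm_sum _ _ _)).
have -> : eta * n%:R = \sum_(k < n) eta by rewrite sumr_const card_ord mulr_natr.
apply: ler_sum => k _; apply/ltW; apply: hf; exact: hy.
Qed.

Lemma birk_bound (phi : M -> M) (f : M -> R) (B : R) n x :
  (forall a, `|f a| <= B) -> `|birkhoff phi f n x| <= B * n%:R.
Proof.
move=> hf; rewrite /birkhoff; apply: (le_trans (ler_norm_sum _ _ _)).
have -> : B * n%:R = \sum_(k < n) B by rewrite sumr_const card_ord mulr_natr.
by apply: ler_sum => k _.
Qed.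

Lemma birkhoffD (phi : M -> M) (f g : M -> R) n x :
  birkhoff phi (fun y => f y + g y) n x = birkhoff phi f n x + birkhoff phi g n x.
Proof. by rewrite /birkhoff big_split. Qed.

Lemma cont_bounded (f : M -> R) : compact [set: M] -> continuous f ->
  exists B, forall x, `|f x| <= B.
Proof.
move=> cM hf; have [d d0 hd] := unif_cont f cM hf 1 ltr01.
have [C hC] := net_exists d cM d0.
exists (\sum_(c <- C) `|f c| + 1) => x.
have [c cC hc] := hC x.
have h1 := hd _ _ hc.
have h2 : `|f c| <= \sum_(c <- C) `|f c|.
  by rewrite (bigD1_seq c) //= lerDl; apply: sumr_ge0.
have -> : f x = f c + (f x - f c) by ring.
apply: (le_trans (ler_normD _ _)); apply: lerD => //; exact: ltW.
Qed.

End misc.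

Section fekete.
Context {R : realType}.
Variable s : nat -> R.
Hypothesis sub : forall n m, s (n + m) <= s n + s m.
Hypothesis lb : exists B, forall n, (0 < n)%N -> - B <= s n / n%:R.

Let S := [set s N / N%:R | N in [set N | (0 < N)%N]].

Lemma fek_lb : has_lbound S.
Proof. by have [B hB] := lb; exists (- B) => _ [N N0 <-]; apply: hB. Qed.

Lemma fek_inf n : (0 < n)%N -> inf S <= s n / n%:R.
Proof. by move=> n0; apply: ge_inf; [exact: fek_lb | exists n]. Qed.

Lemma fek_iter q N r : s (q * N + r) <= q%:R * s N + s r.
Proof.
elim: q => [|q IH]; first by rewrite mul0n add0n mul0r add0r.
rewrite mulSn -addnA; apply: (le_trans (sub _ _)).
rewrite -nat1r mulrDl mul1r -addrA lerD2l; exact: IH.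
Qed.

Lemma fek_ev eta : 0 < eta -> \forall n \near \oo, s n / n%:R <= inf S + eta.
Proof.
move=> eta0.
have eta2 : 0 < eta / 2 by rewrite divr_gt0.
have [_ [N N0 <-] hN] := inf_adherent eta2 (conj (ex_intro _ (s 1 / 1%:R) (ex_intro2 _ _ 1%N isT erefl)) fek_lb).
set D := \sum_(r < N) `|s r| + `|s N|.
have D0 : 0 <= D by rewrite addr_ge0 // sumr_ge0.
have [K hK] : exists K : nat, D / (eta / 2) < K%:R.
  by exists (Num.trunc (D / (eta / 2))).+1; rewrite truncnS_gt.
near=> n.
have n0 : (0 < n)%N by near: n; exact: nbhs_infty_gt.
have nK : (K <= n)%N by near: n; exists K.
have npos : 0 < n%:R :> R by rewrite ltr0n.
have Npos : 0 < N%:R :> R by rewrite ltr0n.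
set q := (n %/ N)%N; set r := (n %% N)%N.
have hn : n = (q * N + r)%N by rewrite /q /r -divn_eq.
have hr : (r < N)%N by rewrite /r ltn_mod.
have h1 : s n <= q%:R * s N + s r by rewrite {1}hn; apply: fek_iter.
have hnR : n%:R = q%:R * N%:R + r%:R :> R by rewrite {1}hn natrD natrM.
have h2 : q%:R * s N = n%:R * (s N / N%:R) - r%:R * (s N / N%:R).
  by rewrite hnR; field; rewrite lt0r_neq0.
have h3 : - (r%:R * (s N / N%:R)) <= `|s N|.
  have -> : r%:R * (s N / N%:R) = (r%:R / N%:R) * s N by rewrite mulrA mulrAC.
  have t0 : 0 <= r%:R / N%:R :> R by rewrite divr_ge0.
  have t1 : r%:R / N%:R <= 1 :> R by rewrite ler_pdivrMr // mul1r ler_nat ltnW.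
  have n1 : - s N <= `|s N| by rewrite -normrN ler_norm.
  have n2 : 0 <= `|s N| by [].
  move: t0 t1 n1 n2; set t := r%:R / N%:R; move=> t0 t1 n1 n2; nra.
have h4 : `|s r| <= \sum_(r0 < N) `|s r0|.
  by rewrite (bigD1 (Ordinal hr)) //= lerDl sumr_ge0.
have h5 : s n <= n%:R * (s N / N%:R) + D.
  apply: (le_trans h1); rewrite h2 /D.
  have : s r <= `|s r| by apply: ler_norm.
  move: h3 h4; set a := r%:R * _; set b := \sum_(_ < _) _; move=> h3 h4 h6.
  lra.
have h6 : D / n%:R <= eta / 2.
  rewrite ler_pdivrMr // mulrC -ler_pdivrMr //; apply: (le_trans (ltW hK)).
  by rewrite ler_nat.
rewrite ler_pdivrMr //.
have : s N / N%:R <= inf S + eta / 2 by apply/ltW.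
move: h5 h6; set u := s N / N%:R; move=> h5 h6 h7.
have h8 : D <= eta / 2 * n%:R by rewrite -ler_pdivrMr.
have h9 : n%:R * u <= n%:R * (inf S + eta / 2) by rewrite ler_pM2l.
nra.
Unshelve. all: by end_near.
Qed.

End fekete.
Section integral_bounds.
Context {R : realType} {M : pmetricType R}.
Variable P : probability (borelT M) R.
Local Open Scope ereal_scope.

Lemma int_indic_sum (E : {fset M}) (B : M -> set M) (c : M -> R) :
  (forall x, measurable (B x : set (borelT M))) -> (forall x, (0 <= c x)%R) ->
  \int[P]_y ((\sum_(x <- E) c x * \1_(B x) y)%R)%:E =
  \sum_(x <- E) (c x)%:E * P (B x).
Proof.
move=> mB c0.
under eq_integral do rewrite -sumEFin.
rewrite ge0_integral_sum //; last first.
- by move=> x y _; rewrite lee_fin mulr_ge0.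
- move=> x; apply/measurable_realfun.measurable_EFinP.
  apply: measurable_realfun.measurable_funM; first exact: measurable_cst.
  exact: measurable_realfun.measurable_indic.
apply: eq_bigr => x _.
rewrite (@integralZl_indic _ _ _ P setT measurableT (fun _ => (B x : set (borelT M))) (c x)) //.
- by rewrite integral_indic // setIT.
- by move=> /lt_geF; rewrite c0.
Qed.

Lemma int_upper (f : borelT M -> R) (E : {fset M}) (B : M -> set M) (c : M -> R) :
  measurable_fun setT f -> (forall y, (0 <= f y)%R) ->
  (forall x, measurable (B x : set (borelT M))) -> (forall x, (0 <= c x)%R) ->
  (forall y, exists2 x, x \in E & B x y) ->
  (forall x y, x \in E -> B x y -> (f y <= c x)%R) ->
  \int[P]_y (f y)%:E <= \sum_(x <- E) (c x)%:E * P (B x).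
Proof.
move=> mf f0 mB c0 cov bnd.
rewrite -int_indic_sum //.
apply: ge0_le_integral => //.
- by move=> y _; rewrite lee_fin.
- exact/measurable_realfun.measurable_EFinP.
- apply/measurable_realfun.measurable_EFinP.
  rewrite [X in measurable_fun _ X](_ : _ = (fun y => \sum_(x <- E) (c x * \1_(B x) y))%R) //.
  apply: measurable_sum => x.
  apply: measurable_realfun.measurable_funM; first exact: measurable_cst.
  exact: measurable_realfun.measurable_indic.
move=> y _; rewrite lee_fin; have [x xE hx] := cov y.
apply: (le_trans (bnd _ _ xE hx)).
rewrite (bigD1_seq x) //= indicE mem_set // mulr1 lerDl.
by apply: sumr_ge0 => z _; rewrite mulr_ge0.
Qed.

Lemma int_lower (f : borelT M -> R) (F : {fset M}) (B : M -> set M) (c : M -> R) :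
  measurable_fun setT f -> (forall y, (0 <= f y)%R) ->
  (forall x, measurable (B x : set (borelT M))) -> (forall x, (0 <= c x)%R) ->
  (forall x x' y, x \in F -> x' \in F -> x != x' -> B x y -> B x' y -> False) ->
  (forall x y, x \in F -> B x y -> (c x <= f y)%R) ->
  \sum_(x <- F) (c x)%:E * P (B x) <= \int[P]_y (f y)%:E.
Proof.
move=> mf f0 mB c0 disj bnd.
rewrite -int_indic_sum //.
apply: ge0_le_integral => //.
- by move=> y _; rewrite lee_fin; apply: sumr_ge0 => x _; rewrite mulr_ge0.
- apply/measurable_realfun.measurable_EFinP.
  rewrite [X in measurable_fun _ X](_ : _ = (fun y => \sum_(x <- F) (c x * \1_(B x) y))%R) //.
  apply: measurable_sum => x.
  apply: measurable_realfun.measurable_funM; first exact: measurable_cst.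
  exact: measurable_realfun.measurable_indic.
- exact/measurable_realfun.measurable_EFinP.
move=> y _; rewrite lee_fin.
have [[x xF hx]|hno] := pselect (exists2 x, x \in F & B x y).
  rewrite (bigD1_seq x) //= indicE mem_set // mulr1.
  rewrite big1_seq ?addr0; first exact: bnd.
  move=> z /andP[zx zF]; rewrite indicE memNset ?mulr0 //.
  by move=> hz; apply: (disj x z y xF zF _ hx hz); rewrite eq_sym.
rewrite big1_seq //.
move=> z /= zF; rewrite indicE memNset ?mulr0 //.
by move=> hz; apply: hno; exists z.
Qed.

End integral_bounds.
Section separated.
Context {R : realType} {M : pmetricType R}.
Variable phi : M -> M.
Hypothesis cM : compact [set: M].
Hypothesis hphi : continuous phi.
Variables (n : nat) (eps : R).
Hypothesis eps0 : 0 < eps.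

Definition sep (F : {fset M}) := forall x x', x \in F -> x' \in F -> x != x' ->
  ~ bowen_ball phi n x (2 * eps) x'.

Lemma sep_card_bound : exists K : nat, forall F, sep F -> (#|` F| <= K)%N.
Proof.
have [E0 hE0] := cover_exists phi n eps cM hphi eps0.
have hpk : forall y, exists e, e \in E0 /\ bowen_ball phi n e eps y.
  move=> y; have : [set: M] y by [].
  by rewrite -hE0 => -[e eE he]; exists e.
have [pk hpk'] := choice hpk.
exists #|` E0| => F sF.
have inj : {in F &, injective pk}.
  move=> x x' xF x'F hxx; case: (eqVneq x x') => // hne.
  exfalso; apply: (sF x x' xF x'F hne) => k kn.
  have [_ h1] := hpk' x; have [_ h2] := hpk' x'.
  rewrite hxx in h1.
  apply: (le_lt_trans (metric_triangle _ (iter k phi (pk x')) _)).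
  have -> : 2 * eps = eps + eps by rewrite mulr2n mulrDl mul1r.
  apply: ltrD; first exact: h2.
  rewrite metric_sym; exact: h1.
have -> : #|` F| = #|` [fset pk x | x in F]%fset| by rewrite card_in_imfset.
apply: fsubset_leq_card; apply/fsubsetP => z /imfsetP [x /= xF ->].
by case: (hpk' x).
Qed.

Lemma sep_exists : exists F : {fset M}, bowen_cover phi n (2 * eps) F /\
  (forall x x' y, x \in F -> x' \in F -> x != x' ->
     bowen_ball phi n x eps y -> bowen_ball phi n x' eps y -> False).
Proof.
have [[F [sF cF]] | hno] := pselect (exists F, sep F /\ bowen_cover phi n (2 * eps) F).
  exists F; split => // x x' y xF x'F hne hx hx'.
  apply: (sF x x' xF x'F hne) => k kn.
  apply: (le_lt_trans (metric_triangle _ (iter k phi y) _)).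
  have -> : 2 * eps = eps + eps by rewrite mulr2n mulrDl mul1r.
  apply: ltrD; last exact: hx k kn.
  rewrite metric_sym; exact: hx' k kn.
exfalso.
have [K hK] := sep_card_bound.
have hm : forall m, exists F, sep F /\ #|` F| = m.
  elim=> [|m [F [sF cF]]].
    by exists fset0; split => // x x'; rewrite inE.
  have [cov|ncov] := pselect (forall y, exists2 x, x \in F & bowen_ball phi n x (2 * eps) y).
    exfalso; apply: hno; exists F; split => //.
    apply/seteqP; split => // y _; have [x xF hx] := cov y; by exists x.
  move/existsNP: ncov => [y hy].
  have yF : y \notin F.
    apply/negP => yF; apply: hy; exists y => //; apply: bowen_center.
    by rewrite mulr_gt0.
  exists (y |` F)%fset; split; last by rewrite cardfsU1 yF cF.
  move=> x x'; rewrite !inE => /orP[/eqP ->|xF] /orP[/eqP ->|x'F] hne.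
  - by rewrite eqxx in hne.
  - move=> hb; apply: hy; exists x' => // k kn; rewrite metric_sym; exact: hb.
  - by move=> hb; apply: hy; exists x.
  - exact: sF.
have [F [sF cF]] := hm K.+1.
by have := hK F sF; rewrite cF ltnn.
Qed.

End separated.
Lemma sum_map_le {R : realType} (T1 T2 : eqType) (s : seq T1) (t : seq T2) (g : T2 -> T1)
  (F : T1 -> R) : uniq s -> uniq t -> (forall x, x \in s -> exists2 w, w \in t & g w = x) ->
  (forall x, 0 <= F x) -> \sum_(x <- s) F x <= \sum_(w <- t) F (g w).
Proof.
elim: s t => [|x s IH] t us ut hst F0.
  by rewrite big_nil; apply: sumr_ge0.
have [w0 w0t gw0] := hst x (mem_head _ _).
rewrite (perm_big _ (perm_to_rem w0t)) /= !big_cons gw0 lerD2l.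
move: us; rewrite cons_uniq => /andP[xs us].
apply: IH => //; first exact: rem_uniq.
move=> x' x's; have [w wt gw] : exists2 w, w \in t & g w = x' by apply: hst; rewrite inE x's orbT.
exists w => //; rewrite mem_rem_uniq // inE wt andbT.
apply/eqP => ww0; move: xs; rewrite -gw0 -ww0 gw.
by rewrite x's.
Qed.

Lemma split_lshift' m n (j : 'I_m) : fintype.split (lshift n j) = inl j.
Proof. exact: (unsplitK (inl _ j)). Qed.

Lemma split_rshift' m n (j : 'I_n) : fintype.split (rshift m j) = inr j.
Proof. exact: (unsplitK (inr _ j)). Qed.

Section words.
Context {R : realType} {M : pmetricType R}.
Variable phi : M -> M.
Variables (C : {fset M}) (r : R) (h : M -> R) (eta Bh : R).
Variable nr : M -> C.
Hypothesis hnr : forall y, mdist y (val (nr y)) < r.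
Hypothesis r0 : 0 < r.
Hypothesis eta0 : 0 <= eta.
Hypothesis hh : forall a b, mdist a b < 2 * r -> `|h a - h b| < eta.
Hypothesis hBh : forall a, `|h a| <= Bh.

Definition word n := {ffun 'I_n -> C}.
Definition Aw {n} (w : word n) : set M :=
  [set x | forall k : 'I_n, mdist (iter k phi x) (val (w k)) < 2 * r].
Definition wt {n} (w : word n) : R := expR (\sum_(k < n) (h (val (w k)) + eta)).
Definition covering {n} (S : {set word n}) : Prop := forall x, exists2 w, w \in S & Aw w x.
Definition wx n x : word n := [ffun k : 'I_n => nr (iter k phi x)].

Lemma wx_in n x : Aw (wx n x) x.
Proof.
move=> k; rewrite ffunE; apply: (lt_trans (hnr _)).
by rewrite ltr_pMl // ltr1n.
Qed.

Lemma covering_setT n : covering [set: word n]%SET.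
Proof. by move=> x; exists (wx n x); [rewrite inE | exact: wx_in]. Qed.

Definition Sopt n : {set word n} :=
  [arg min_(S < [set: word n]%SET | `[< covering S >]) \sum_(w in S) wt w]%O.
Definition pw n := \sum_(w in Sopt n) wt (n:=n) w.

Lemma Sopt_spec n : covering (Sopt n) /\
  forall S : {set word n}, covering S -> pw n <= \sum_(w in S) wt w.
Proof.
rewrite /pw /Sopt; case: arg_minP; first by apply/asboolP; apply: covering_setT.
move=> S /asboolP hS hmin; split => // S' hS'; apply: hmin; exact/asboolP.
Qed.

Lemma wt_gt0 n (w : word n) : 0 < wt w.
Proof. exact: expR_gt0. Qed.

Lemma pw_lb n : expR (- (Bh * n%:R)) <= pw n.
Proof.
have [hc _] := Sopt_spec n.
have [w wS _] := hc point.
apply: (@le_trans _ _ (wt w)).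
  rewrite /wt ler_expR.
  have -> : - (Bh * n%:R) = \sum_(k < n) (- Bh) by rewrite sumr_const card_ord mulr_natr mulNrn.
  apply: ler_sum => k _; have := hBh (val (w k)); rewrite ler_norml => /andP[h1 _].
  by apply: (le_trans h1); rewrite lerDl.
rewrite /pw (bigD1 w) //= lerDl; apply: sumr_ge0 => u _; exact/ltW/wt_gt0.
Qed.

Lemma pw_gt0 n : 0 < pw n.
Proof. exact: (lt_le_trans (expR_gt0 _) (pw_lb n)). Qed.

Definition wcat {n m} (u : word n) (v : word m) : word (n + m) :=
  [ffun i => match fintype.split i with inl j => u j | inr j => v j end].

Lemma wt_cat n m (u : word n) (v : word m) : wt (wcat u v) = wt u * wt v.
Proof.
rewrite /wt -expRD big_split_ord; congr expR; congr (_ + _); apply: eq_bigr => j _;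
  by rewrite ffunE ?split_lshift' ?split_rshift'.
Qed.

Lemma Aw_cat n m (u : word n) (v : word m) x :
  Aw u x -> Aw v (iter n phi x) -> Aw (wcat u v) x.
Proof.
move=> hu hv i; rewrite ffunE; case: splitP => j hij.
  by have := hu j; rewrite hij.
by have := hv j; rewrite -iterD hij addnC.
Qed.

Lemma pw_sub n m : pw (n + m) <= pw n * pw m.
Proof.
have [hn _] := Sopt_spec n; have [hm _] := Sopt_spec m.
have [_ hnm] := Sopt_spec (n + m).
set A := [set p : word n * word m | (p.1 \in Sopt n) && (p.2 \in Sopt m)]%SET.
set S := [set wcat p.1 p.2 | p in A]%SET.
have cS : covering S.
  move=> x; have [u uS hu] := hn x; have [v vS hv] := hm (iter n phi x).
  exists (wcat u v); last exact: Aw_cat.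
  by apply/imsetP; exists (u, v) => //; rewrite inE /= uS vS.
apply: (le_trans (hnm _ cS)).
have -> : pw n * pw m = \sum_(p in A) wt (wcat p.1 p.2).
  rewrite /pw big_distrlr /= pair_big_dep /=.
  apply: eq_big => [p|p _]; first by rewrite inE.
  by rewrite wt_cat.
rewrite -!big_enum /=.
apply: sum_map_le; [exact: enum_uniq | exact: enum_uniq | | by move=> w; exact/ltW/wt_gt0].
move=> w; rewrite mem_enum => /imsetP [p pA ->]; exists p => //.
by rewrite mem_enum.
Qed.

Lemma h_close a b : mdist a b < 2 * r -> h b <= h a + eta.
Proof.
move=> hab; have := hh _ _ hab; rewrite ltr_norml => /andP[h1 _].
have : - eta < h a - h b by []. move=> h2; apply/ltW; lra.
Qed.

Lemma birk_sum n x :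
  \sum_(k < n) (h (iter k phi x) + 2 * eta) = birkhoff phi h n x + 2 * eta * n%:R.
Proof. by rewrite big_split /= sumr_const card_ord mulr_natr. Qed.

Lemma pw_le_cover n (E : {fset M}) : bowen_cover phi n r E ->
  pw n <= \sum_(x <- E) expR (birkhoff phi h n x + 2 * eta * n%:R).
Proof.
move=> hE.
set S := [set w : word n | `[< exists2 x, x \in E & w = wx n x >]]%SET.
have cS : covering S.
  move=> y; have : [set: M] y by [].
  rewrite -hE => -[x /= xE hx]; exists (wx n x).
    by rewrite inE; apply/asboolP; exists x.
  move=> k; rewrite ffunE.
  apply: (le_lt_trans (metric_triangle _ (iter k phi x) _)).
  have -> : 2 * r = r + r by rewrite mulr2n mulrDl mul1r.
  by apply: ltrD; [exact: hx | exact: hnr].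
have [_ hS] := Sopt_spec n.
apply: (le_trans (hS _ cS)).
apply: (@le_trans _ _ (\sum_(x <- E) wt (wx n x))).
  rewrite -big_enum /=; apply: sum_map_le; [exact: enum_uniq|exact: fset_uniq| |].
    move=> w; rewrite mem_enum inE => /asboolP [x xE ->]; by exists x.
  by move=> w; exact/ltW/wt_gt0.
apply: ler_sum => x _; rewrite /wt ler_expR -birk_sum.
apply: ler_sum => k _; rewrite ffunE.
have : h (val (nr (iter k phi x))) <= h (iter k phi x) + eta.
  apply: h_close; apply: (lt_trans (hnr _)).
  by rewrite ltr_pMl // ltr1n.
move=> h1; lra.
Qed.

Lemma cover_from_pw n : exists E : {fset M}, bowen_cover phi n (4 * r) E /\
  \sum_(x <- E) expR (birkhoff phi h n x) <= pw n.
Proof.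
have [hc _] := Sopt_spec n.
have hx : forall w : word n, exists x, (exists y, Aw w y) -> Aw w x.
  move=> w; have [[y hy]|hno] := pselect (exists y, Aw w y).
    by exists y.
  by exists point => hy; exfalso; apply: hno.
have [xw hxw] := choice hx.
set Sne := [set w in Sopt n | `[< exists y, Aw w y >]]%SET.
exists [fset xw w | w in Sne]%fset; split.
  apply/seteqP; split => // y _.
  have [w wS hw] := hc y.
  have wne : w \in Sne by rewrite inE wS; apply/asboolP; exists y.
  exists (xw w); first by apply/imfsetP; exists w.
  move=> k kn; have h1 := hw (Ordinal kn); have h2 := hxw w (ex_intro _ y hw) (Ordinal kn).
  simpl in h1, h2.
  apply: (le_lt_trans (metric_triangle _ (val (w (Ordinal kn))) _)).
  have -> : 4 * r = 2 * r + 2 * r by rewrite -mulrDl; congr (_ * _); rewrite -natrD.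
  by apply: ltrD => //; rewrite metric_sym.
apply: (@le_trans _ _ (\sum_(w <- enum Sne) expR (birkhoff phi h n (xw w)))).
  apply: sum_map_le; [exact: fset_uniq|exact: enum_uniq| |by move=> x; apply: expR_ge0].
  by move=> x /imfsetP [w /= wS ->]; exists w => //; rewrite mem_enum.
rewrite big_enum /=.
apply: (@le_trans _ _ (\sum_(w in Sne) wt w)).
  apply: ler_sum => w; rewrite inE => /andP[_ /asboolP [y hy]].
  rewrite /wt ler_expR /birkhoff; apply: ler_sum => k _.
  apply: h_close; rewrite metric_sym; exact: (hxw w (ex_intro _ y hy) k).
rewrite /pw.
rewrite (eq_bigl (fun w => (w \in Sopt n) && `[< exists y, Aw w y >])); last by move=> w; rewrite inE.
rewrite -big_filter; apply: (@le_trans _ _ (\sum_(w in Sopt n) wt w)); last by [].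
rewrite big_filter big_mkcondr /=; apply: ler_sum => w _.
by case: ifP => _ //; exact/ltW/wt_gt0.
Qed.

End words.
Lemma near_right {R : realType} {Q : R -> Prop} : (\forall x \near 0^'+, Q x) ->
  exists2 e, 0 < e & forall x, 0 < x -> x < e -> Q x.
Proof.
move=> /nbhs_ballP [e e0 he]; exists e => // x x0 xe.
apply: he => //; by rewrite /ball /= sub0r normrN gtr0_norm.
Qed.

Section main.
Context {R : realType} {M : pmetricType R}.
Variables (phi : M -> M) (G G' : nat -> M -> R) (P : probability (borelT M) R).
Hypothesis cM : compact [set: M].
Hypothesis hphi : continuous phi.
Hypothesis hA : classA phi G.
Hypothesis hA' : classA phi G'.
Variables (p : R) (K : nat -> R -> R).
Hypothesis hK : forall n eps, (1 <= n)%N -> 0 < eps ->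
       1 <= K n eps /\
       forall x,
         (((K n eps)^-1 * expR (G n x - n%:R * p))%:E <= P (bowen_ball phi n x eps))%E /\
         (P (bowen_ball phi n x eps) <= (K n eps * expR (G n x - n%:R * p))%:E)%E.
Hypothesis hKlim : (fun eps => limn_esup (fun n => (ln (K n eps) / n%:R)%:E)) @ 0^'+ --> (0 : \bar R).

Definition HH n x := G n x + G' n x.
Definition II n := Rintegral P setT (fun x : borelT M => expR (G' n x)).
Definition aa n := ln (II n) / n%:R.
Definition ZZ eps n := ln (Zc phi HH n eps) / n%:R.

Lemma HH_lb n : exists c, forall x, c <= HH n x.
Proof.
have [C1 h1] := classA_bnd _ _ hA n; have [C2 h2] := classA_bnd _ _ hA' n.
exists (- (C1 + C2)) => x; rewrite /HH.
have := h1 x; have := h2 x; rewrite !ler_norml => /andP[a1 _] /andP[a2 _]; lra.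
Qed.

Lemma mG' n : measurable_fun [set: borelT M] (fun x : borelT M => expR (G' n x)).
Proof.
case: hA' => _ [hm _].
exact: (measurableT_comp (@measurable_realfun.measurable_expR R) (hm n)).
Qed.

Lemma II_props {n lo hi} : (forall x, lo <= G' n x <= hi) ->
  (\int[P]_y (expR (G' n y))%:E)%E = (II n)%:E /\ expR lo <= II n <= expR hi.
Proof.
move=> hb.
have up : (\int[P]_y (expR (G' n y))%:E <= (expR hi)%:E)%E.
  apply: (le_trans (@int_upper R M P (fun y => expR (G' n y)) [fset point]%fset
      (fun _ => setT) (fun _ => expR hi) (mG' n) _ _ _ _ _)).
  - by move=> y; apply: expR_ge0.
  - by move=> _; exact: measurableT.
  - by move=> _; apply: expR_ge0.
  - by move=> y; exists point => //; rewrite inE.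
  - by move=> x y _ _; rewrite ler_expR; have /andP[] := hb y.
  - by rewrite big_seq_fset1 probability_setT mule1.
have lo' : ((expR lo)%:E <= \int[P]_y (expR (G' n y))%:E)%E.
  apply: (le_trans _ (@int_lower R M P (fun y => expR (G' n y)) [fset point]%fset
      (fun _ => setT) (fun _ => expR lo) (mG' n) _ _ _ _ _)).
  - by rewrite big_seq_fset1 probability_setT mule1.
  - by move=> y; apply: expR_ge0.
  - by move=> _; exact: measurableT.
  - by move=> _; apply: expR_ge0.
  - by move=> x x' y; rewrite !inE => /eqP -> /eqP ->; rewrite eqxx.
  - by move=> x y _ _; rewrite ler_expR; have /andP[] := hb y.
have fin : (\int[P]_y (expR (G' n y))%:E)%E \is a fin_num.
  rewrite fin_numElt; apply/andP; split.
    by apply: (lt_le_trans _ lo'); exact: ltNyr.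
  by apply: (le_lt_trans up); exact: ltry.
have eq : (\int[P]_y (expR (G' n y))%:E)%E = (II n)%:E by rewrite /II /Rintegral fineK.
split => //; move: up lo'; rewrite eq !lee_fin => up lo'; by rewrite lo' up.
Qed.

Lemma G'_bnd n : exists2 C, 0 <= C & forall x, - C <= G' n x <= C.
Proof.
have [C hC] := classA_bnd _ _ hA' n.
exists `|C|; first by [].
move=> x; have := hC x; rewrite ler_norml => /andP[a b].
have hc : C <= `|C| := ler_norm C.
apply/andP; split; lra.
Qed.

Lemma II_pos n : 0 < II n.
Proof.
have [C _ hC] := G'_bnd n.
have [_ /andP[h _]] := II_props hC.
exact: (lt_le_trans (expR_gt0 _) h).
Qed.

Lemma K_ev eta : 0 < eta -> exists2 e, 0 < e & forall eps, 0 < eps -> eps < e ->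
  \forall n \near \oo, ln (K n eps) / n%:R < eta.
Proof.
move=> eta0; move/fine_cvgP: hKlim => [hfin /cvgrPdist_lt /(_ _ eta0) hlt].
have [e e0 he] := near_right (filterI hfin hlt).
exists e => // eps eps0 epse.
have [h1] := he _ eps0 epse; rewrite /= sub0r normrN => h2.
apply: esup_lt_ev; rewrite -(fineK h1) lte_fin.
exact: (le_lt_trans (ler_norm _) h2).
Qed.

Lemma div_le (n : nat) (A B c : R) : (0 < n)%N -> A <= B + c * n%:R ->
  A / n%:R <= B / n%:R + c.
Proof.
move=> n0 h; have np : 0 < n%:R :> R by rewrite ltr0n.
rewrite ler_pdivrMr // mulrDl divfK ?lt0r_neq0 //.
Qed.

Lemma div_ge (n : nat) (A B c : R) : (0 < n)%N -> B + c * n%:R <= A ->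
  B / n%:R + c <= A / n%:R.
Proof.
move=> n0 h; have np : 0 < n%:R :> R by rewrite ltr0n.
rewrite ler_pdivlMr // mulrDl divfK ?lt0r_neq0 //.
Qed.

Lemma expR_swap (a b c d : R) : a + b = c + d -> expR a * expR b = expR c * expR d.
Proof. by rewrite -!expRD => ->. Qed.

Lemma bowen_sub {n x e1 e2 y} : e1 <= e2 -> bowen_ball phi n x e1 y -> bowen_ball phi n x e2 y.
Proof. by move=> e12 h k kn; exact: (lt_le_trans (h k kn) e12). Qed.

Lemma Hup eta : 0 < eta -> exists2 e0, 0 < e0 & forall eps, 0 < eps -> eps < e0 ->
  \forall n \near \oo, aa n <= ZZ eps n - p + eta.
Proof.
move=> eta0; set e := eta / 4.
have e0 : 0 < e by rewrite divr_gt0.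
have [g' hg'c hg'] := classA_approx _ _ hA' e e0.
have [d d0 hd] := unif_cont g' cM hg'c e e0.
have [eK eK0 hKe] := K_ev e e0.
exists (Num.min d eK); first by rewrite lt_min d0 eK0.
move=> eps eps0; rewrite lt_min => /andP[epsd epsK].
have hKn := hKe eps eps0 epsK.
near=> n.
have n0 : (0 < n)%N by near: n; exact: nbhs_infty_gt.
have hn : forall x, `|G' n x - birkhoff phi g' n x| <= e * n%:R by near: n.
have hkn : ln (K n eps) / n%:R < e by near: n.
have [K1 hKx] := hK n eps n0 eps0.
have K0 : 0 < K n eps by exact: (lt_le_trans ltr01 K1).
set c := e * n%:R.
have hint : forall E, bowen_cover phi n eps E ->
    II n <= K n eps * expR (3 * c - n%:R * p) * \sum_(x <- E) expR (HH n x).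
  move=> E hE.
  have [C _ hC] := G'_bnd n; have [hII _] := II_props hC.
  have cov : forall y, exists2 x, x \in E & bowen_ball phi n x eps y.
    by move=> y; have : [set: M] y by []; rewrite -hE => -[x xE hx]; exists x.
  have bnd : forall x y, x \in E -> bowen_ball phi n x eps y ->
      expR (G' n y) <= expR (G' n x + 3 * c).
    move=> x y xE hy; rewrite ler_expR.
    have h1 := hn x; have h2 := hn y.
    have h3 := birk_var phi g' d e n x y hd (bowen_sub (ltW epsd) hy).
    rewrite ler_norml in h1; rewrite ler_norml in h2; rewrite ler_norml in h3.
    move/andP: h1 => [h1 h1']; move/andP: h2 => [h2 h2']; move/andP: h3 => [h3 h3'].
    rewrite /c; lra.
  have hup := @int_upper R M P (fun y => expR (G' n y)) E (fun x => bowen_ball phi n x eps)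
    (fun x => expR (G' n x + 3 * c)) (mG' n) (fun y => expR_ge0 _)
    (fun x => bowen_meas phi n x eps hphi) (fun x => expR_ge0 _) cov bnd.
  rewrite hII in hup.
  have hup2 : (\sum_(x <- E) (expR (G' n x + 3 * c))%:E * P (bowen_ball phi n x eps) <=
      (\sum_(x <- E) expR (G' n x + 3 * c) * (K n eps * expR (G n x - n%:R * p)))%:E)%E.
    rewrite -sumEFin; apply: lee_sum => x _; rewrite EFinM; apply: lee_pmul => //.
    exact: (hKx x).2.
  have := le_trans hup hup2; rewrite lee_fin => h.
  apply: (le_trans h); rewrite big_distrr /=; apply: ler_sum => x _.
  have ex : expR (G' n x + 3 * c) * expR (G n x - n%:R * p) =
            expR (3 * c - n%:R * p) * expR (HH n x).
    by apply: expR_swap; rewrite /HH; lra.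
  by rewrite mulrCA ex mulrA.
have hZ : II n / (K n eps * expR (3 * c - n%:R * p)) <= Zc phi HH n eps.
  apply: (@Zc_glb R M phi cM hphi HH n eps eps0 (HH_lb n)) => E hE.
  rewrite ler_pdivrMr ?mulr_gt0 ?expR_gt0 // mulrC; exact: hint.
have hZpos := @Zc_pos R M phi cM hphi HH n eps eps0 (HH_lb n).
have hII0 := II_pos n.
rewrite ler_pdivrMr ?mulr_gt0 ?expR_gt0 // mulrC in hZ.
have hln : ln (II n) <= ln (K n eps) + (3 * c - n%:R * p) + ln (Zc phi HH n eps).
  have h := hZ; rewrite -ler_ln ?posrE ?mulr_gt0 ?expR_gt0 // in h.
  by rewrite !lnM ?posrE ?mulr_gt0 ?expR_gt0 // expRK in h.
have np : 0 < n%:R :> R by rewrite ltr0n.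
have hK' : ln (K n eps) < e * n%:R by rewrite -ltr_pdivrMr.
have hrel : (eta - p) * n%:R = 4 * (e * n%:R) - n%:R * p.
  by rewrite /e; field.
suff : ln (II n) / n%:R <= ln (Zc phi HH n eps) / n%:R + (eta - p).
  by rewrite /aa /ZZ; lra.
apply: div_le => //; rewrite hrel; rewrite /c in hln; lra.
Unshelve. all: by end_near.
Qed.

Lemma Hlo eta : 0 < eta -> exists2 e0, 0 < e0 & forall eps, 0 < eps -> eps < e0 ->
  \forall n \near \oo, ZZ (2 * eps) n - p - eta <= aa n.
Proof.
move=> eta0; set e := eta / 4.
have e0 : 0 < e by rewrite divr_gt0.
have [g' hg'c hg'] := classA_approx _ _ hA' e e0.
have [d d0 hd] := unif_cont g' cM hg'c e e0.
have [eK eK0 hKe] := K_ev e e0.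
exists (Num.min d eK); first by rewrite lt_min d0 eK0.
move=> eps eps0; rewrite lt_min => /andP[epsd epsK].
have hKn := hKe eps eps0 epsK.
near=> n.
have n0 : (0 < n)%N by near: n; exact: nbhs_infty_gt.
have hn : forall x, `|G' n x - birkhoff phi g' n x| <= e * n%:R by near: n.
have hkn : ln (K n eps) / n%:R < e by near: n.
have [K1 hKx] := hK n eps n0 eps0.
have K0 : 0 < K n eps by exact: (lt_le_trans ltr01 K1).
set c := e * n%:R.
have [F [cF dF]] := sep_exists phi cM hphi n eps eps0.
have [C _ hC] := G'_bnd n; have [hII _] := II_props hC.
have bnd : forall x y, x \in F -> bowen_ball phi n x eps y ->
    expR (G' n x - 3 * c) <= expR (G' n y).
  move=> x y xE hy; rewrite ler_expR.
  have h1 := hn x; have h2 := hn y.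
  have h3 := birk_var phi g' d e n x y hd (bowen_sub (ltW epsd) hy).
  rewrite ler_norml in h1; rewrite ler_norml in h2; rewrite ler_norml in h3.
  move/andP: h1 => [h1 h1']; move/andP: h2 => [h2 h2']; move/andP: h3 => [h3 h3'].
  rewrite /c; lra.
have hlo := @int_lower R M P (fun y => expR (G' n y)) F (fun x => bowen_ball phi n x eps)
    (fun x => expR (G' n x - 3 * c)) (mG' n) (fun y => expR_ge0 _)
    (fun x => bowen_meas phi n x eps hphi) (fun x => expR_ge0 _) dF bnd.
rewrite hII in hlo.
have hlo2 : ((\sum_(x <- F) expR (G' n x - 3 * c) * ((K n eps)^-1 * expR (G n x - n%:R * p)))%:E <=
    \sum_(x <- F) (expR (G' n x - 3 * c))%:E * P (bowen_ball phi n x eps))%E.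
  rewrite -sumEFin; apply: lee_sum => x _; rewrite EFinM; apply: lee_pmul => //.
    by rewrite lee_fin mulr_ge0 ?invr_ge0 ?expR_ge0 // ltW.
  exact: (hKx x).1.
have := le_trans hlo2 hlo; rewrite lee_fin => h.
have Kexp0 : 0 < K n eps * expR (3 * c + n%:R * p) by rewrite mulr_gt0 ?expR_gt0.
have hsum : \sum_(x <- F) expR (HH n x) <= K n eps * expR (3 * c + n%:R * p) * II n.
  rewrite -ler_pdivrMl //; apply: le_trans h; rewrite big_distrr /=.
  apply: ler_sum => x _.
  rewrite invfM ?lt0r_neq0 ?expR_gt0 // -expRN -mulrA mulrCA.
  rewrite [X in _ <= X]mulrCA.
  have -> : expR (G' n x - 3 * c) * expR (G n x - n%:R * p) =
            expR (- (3 * c + n%:R * p)) * expR (HH n x).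
    by apply: expR_swap; rewrite /HH; lra.
  by rewrite mulrCA.
have hZ : Zc phi HH n (2 * eps) <= \sum_(x <- F) expR (HH n x).
  apply: (@Zc_lb R M phi cM hphi HH n (2 * eps) _ (HH_lb n)) => //.
  by rewrite mulr_gt0.
have hZpos := @Zc_pos R M phi cM hphi HH n (2 * eps) (mulr_gt0 (ltr0Sn _ 1) eps0) (HH_lb n).
have hII0 := II_pos n.
have hZ2 := le_trans hZ hsum.
have hln : ln (Zc phi HH n (2 * eps)) <= ln (K n eps) + (3 * c + n%:R * p) + ln (II n).
  have h' := hZ2; rewrite -ler_ln ?posrE ?mulr_gt0 ?expR_gt0 // in h'.
  by rewrite !lnM ?posrE ?mulr_gt0 ?expR_gt0 // expRK in h'.
have np : 0 < n%:R :> R by rewrite ltr0n.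
have hK' : ln (K n eps) < e * n%:R by rewrite -ltr_pdivrMr.
have hrel : (- p - eta) * n%:R = - (4 * (e * n%:R)) - n%:R * p.
  by rewrite /e; field.
suff : ln (Zc phi HH n (2 * eps)) / n%:R + (- p - eta) <= ln (II n) / n%:R.
  by rewrite /aa /ZZ; lra.
apply: div_ge => //; rewrite hrel; rewrite /c in hln; lra.
Unshelve. all: by end_near.
Qed.

Lemma Ha : exists C, \forall n \near \oo, aa n <= C.
Proof.
have [g' hg'c hg'] := classA_approx _ _ hA' 1 ltr01.
have [B hB] := cont_bounded g' cM hg'c.
exists (B + 1); near=> n.
have n0 : (0 < n)%N by near: n; exact: nbhs_infty_gt.
have hn : forall x, `|G' n x - birkhoff phi g' n x| <= 1 * n%:R by near: n.
have np : 0 < n%:R :> R by rewrite ltr0n.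
have hb : forall x, - ((B + 1) * n%:R) <= G' n x <= (B + 1) * n%:R.
  move=> x; have h1 := hn x; have h2 := birk_bound phi g' B n x hB.
  rewrite ler_norml in h1; rewrite ler_norml in h2.
  move/andP: h1 => [h1 h1']; move/andP: h2 => [h2 h2'].
  apply/andP; split; rewrite mulrDl mul1r; lra.
have [_ /andP[_ hi]] := II_props hb.
have hII0 := II_pos n.
have : ln (II n) <= (B + 1) * n%:R.
  by rewrite -(expRK ((B + 1) * n%:R)) ler_ln ?posrE ?expR_gt0.
move=> h; rewrite /aa ler_pdivrMr //.
Unshelve. all: by end_near.
Qed.

Lemma Hword eta : 0 < eta -> exists2 e0, 0 < e0 & forall r, 0 < r -> r < e0 ->
      exists L, (\forall n \near \oo, L - eta <= ZZ r n) /\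
                (\forall n \near \oo, ZZ (4 * r) n <= L + eta).
Proof.
move=> eta0; set e := eta / 4.
have e0 : 0 < e by rewrite divr_gt0.
have [g hgc hg] := classA_approx _ _ hA e e0.
have [g' hg'c hg'] := classA_approx _ _ hA' e e0.
set h := fun x => g x + g' x.
have hc : continuous h by move=> x; exact: (continuousD (hgc x) (hg'c x)).
have [Bh hBh] := cont_bounded h cM hc.
have [d d0 hd] := unif_cont h cM hc e e0.
exists (d / 2); first by rewrite divr_gt0.
move=> r r0 rd.
have [C hC] := net_exists r cM r0.
have hnr' : forall y, exists c : C, mdist y (val c) < r.
  by move=> y; have [c cC hc'] := hC y; exists [` cC]%fset.
have [nr hnr] := choice hnr'.
have hh : forall a b, mdist a b < 2 * r -> `|h a - h b| < e.
  move=> a b hab; apply: hd; apply: (lt_trans hab).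
  by rewrite -ltr_pdivlMl // mulrC.
have ee0 : 0 <= e by exact: ltW.
set s := fun n => ln (pw phi C r h e n).
have pwpos := @pw_gt0 R M phi C r h e Bh nr hnr r0 ee0 hBh.
have ssub : forall n m, s (n + m)%N <= s n + s m.
  move=> n m; rewrite /s -lnM ?posrE //.
  by rewrite ler_ln ?posrE ?mulr_gt0 //; exact: (@pw_sub R M phi C r h e nr hnr r0 n m).
have slb : exists B, forall n, (0 < n)%N -> - B <= s n / n%:R.
  exists Bh => n n0; have np : 0 < n%:R :> R by rewrite ltr0n.
  rewrite ler_pdivlMr // mulNr /s -(expRK (- (Bh * n%:R))) ler_ln ?posrE ?expR_gt0 //.
  exact: (@pw_lb R M phi C r h e Bh nr hnr r0 ee0 hBh n).
exists (inf [set s N / N%:R | N in [set N | (0 < N)%N]]).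
have happrox : \forall n \near \oo, forall x, `|HH n x - birkhoff phi h n x| <= 2 * e * n%:R.
  apply: filterS2 hg hg' => n h1 h2 x.
  rewrite /HH /h birkhoffD.
  have := h1 x; have := h2 x; rewrite !ler_norml => /andP[a1 a2] /andP[b1 b2].
  apply/andP; split; lra.
split.
  near=> n.
  have n0 : (0 < n)%N by near: n; exact: nbhs_infty_gt.
  have hap : forall x, `|HH n x - birkhoff phi h n x| <= 2 * e * n%:R by near: n.
  have np : 0 < n%:R :> R by rewrite ltr0n.
  have hZ : pw phi C r h e n / expR (4 * e * n%:R) <= Zc phi HH n r.
    apply: (@Zc_glb R M phi cM hphi HH n r r0 (HH_lb n)) => E hE.
    rewrite ler_pdivrMr ?expR_gt0 //.
    apply: (le_trans (@pw_le_cover R M phi C r h e nr hnr r0 hh n E hE)).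
    rewrite big_distrl /=; apply: ler_sum => x _.
    rewrite -expRD ler_expR; have := hap x; rewrite ler_norml => /andP[a1 a2]; lra.
  have hZpos := @Zc_pos R M phi cM hphi HH n r r0 (HH_lb n).
  have hln : s n - 4 * e * n%:R <= ln (Zc phi HH n r).
    rewrite /s -(expRK (4 * e * n%:R)) -lnV ?posrE ?expR_gt0 // -lnM ?posrE ?invr_gt0 ?expR_gt0 //.
    by rewrite ler_ln ?posrE ?mulr_gt0 ?invr_gt0 ?expR_gt0.
  have hinf := fek_inf s slb n n0.
  have : s n / n%:R + (- (4 * e)) <= ln (Zc phi HH n r) / n%:R.
    apply: div_ge => //; lra.
  have e4 : 4 * e = eta by rewrite /e; field.
  rewrite /ZZ; move: hinf; set I0 := inf _; move=> hinf hdiv; lra.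
have hfek := fek_ev s ssub slb e e0.
near=> n.
have n0 : (0 < n)%N by near: n; exact: nbhs_infty_gt.
have hap : forall x, `|HH n x - birkhoff phi h n x| <= 2 * e * n%:R by near: n.
have hf : s n / n%:R <= inf [set s N / N%:R | N in [set N | (0 < N)%N]] + e by near: n.
have np : 0 < n%:R :> R by rewrite ltr0n.
have r40 : 0 < 4 * r by rewrite mulr_gt0.
have [E [hE hEs]] := @cover_from_pw R M phi C r h e nr hnr r0 hh n.
have hZ : Zc phi HH n (4 * r) <= expR (2 * e * n%:R) * pw phi C r h e n.
  apply: (le_trans (@Zc_lb R M phi cM hphi HH n (4 * r) r40 (HH_lb n) E hE)).
  apply: (le_trans _ (ler_wpM2l (expR_ge0 _) hEs)).
  rewrite big_distrr /=; apply: ler_sum => x _.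
  rewrite -expRD ler_expR; have := hap x; rewrite ler_norml => /andP[a1 a2]; lra.
have hZpos := @Zc_pos R M phi cM hphi HH n (4 * r) r40 (HH_lb n).
have hln : ln (Zc phi HH n (4 * r)) <= 2 * e * n%:R + s n.
  rewrite /s -(expRK (2 * e * n%:R)) -lnM ?posrE ?expR_gt0 //.
  by rewrite ler_ln ?posrE ?mulr_gt0 ?expR_gt0.
have : ln (Zc phi HH n (4 * r)) / n%:R <= s n / n%:R + 2 * e.
  apply: div_le => //; lra.
have e4 : 4 * e = eta by rewrite /e; field.
rewrite /ZZ; move: hf; set I0 := inf _; move=> hf hdiv; lra.
Unshelve. all: by end_near.
Qed.

Lemma main_conv : (fun n => (aa n)%:E) @ \oo -->
  (lim ((fun eps => limn_esup (fun n => (ZZ eps n)%:E)) @ 0^'+) - p%:E)%E.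
Proof.
apply: abstract_main.
- move=> e1 e2 n e10 e12; exact: (Zf_mono phi HH n e1 e2 cM hphi (HH_lb n) e10 e12).
- exact: Ha.
- exact: Hup.
- exact: Hlo.
- exact: Hword.
Qed.

End main.

Theorem lemma5p4 (R : realType) (M : pmetricType R) (phi : M -> M)
    (G : nat -> M -> R) (P : probability (borelT M) R) :
  compact [set: M] -> continuous phi ->
  (htop phi < +oo)%E -> entropy_usc phi ->
  classA phi G -> weak_gibbs phi G P ->
  forall G' : nat -> M -> R, classA phi G' ->
    (fun n => (ln (Rintegral P setT (fun x : borelT M => expR (G' n x))) / n%:R)%:E)
      @ \oo --> (pressure phi (fun n x => (G n x + G' n x)%R) - pressure phi G)%E.
Proof.
move=> cM hphi _ _ hA [p [hp [K [hK hKlim]]]] G' hA'.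
rewrite hp.
exact: (@main_conv R M phi G G' P cM hphi hA hA' p K hK hKlim).
Qed.
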